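(* Let $m,n\ge1$, let $\mathbf{V}\in\mathbb{R}^{n\times n}$ be a nonzero symmetric matrix such that $\langle\mathbf{X}^\intercal\mathbf{X},\mathbf{V}/\|\mathbf{V}\|\rangle\ge0$ for all $\mathbf{X}\in\mathbb{R}^{m\times n}$, and let $\|\mathbf{X}\|_{\mathcal{H}}(\mathbf{V})=\big(\langle\mathbf{X}^\intercal\mathbf{X},\mathbf{V}/\|\mathbf{V}\|\rangle\big)^{1/2}$. Let $\mathcal{X}\subseteq\mathbb{R}^{m\times n}$ be a domain of inputs and $\mathcal{W}\subseteq\mathbb{R}^{m\times n}$ a set of weight matrices (the same for both classifiers), and let $\Phi(a,y)=\max\{0,1-ay\}$ be the hinge loss with $y\in\{-1,+1\}$. Define $R=\sup_{\mathbf{X}\in\mathcal{X}}\|\mathbf{X}\|$, $B=\sup_{\mathbf{W}\in\mathcal{W}}\|\mathbf{W}\|$, $R'=\sup_{\mathbf{X}\in\mathcal{X}}\|\mathbf{X}\|_{\mathcal{H}}(\mathbf{V})$, $B'=\sup_{\mathbf{W}\in\mathcal{W}}\|\mathbf{W}\|_{\mathcal{H}}(\mathbf{V})$, $c=\max_{y}\max_{a\in[-BR,BR]}|\Phi(a,y)|$ and $c'=\max_y\max_{a\in[-B'R',B'R']}|\Phi(a,y)|$. Then $R'\le R$, $B'\le B$ and $c'\le c$.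
   Context: $\langle\mathbf{A},\mathbf{B}\rangle=\sum_{i,j}a_{ij}b_{ij}$ denotes the Frobenius inner product and $\|\cdot\|$ the Frobenius norm. $R,B,c$ are the constants appearing in the generalization bound for the Frobenius-norm constrained support tensor machine, and $R',B',c'$ those appearing in the analogous bound for the kernel support matrix machine with norm $\|\cdot\|_{\mathcal{H}}(\mathbf{V})$. *)

(* Defs.v *)
From HB Require Import structures.
From mathcomp Require Import all_boot all_order all_algebra.
From mathcomp Require Import boolp classical_sets reals.
Set Implicit Arguments. Unset Strict Implicit. Unset Printing Implicit Defensive.
Import Order.TTheory GRing.Theory Num.Theory.
Local Open Scope ring_scope.
Local Open Scope classical_set_scope.

Definition frob {R : realType} {p q : nat} (A B : 'M[R]_(p, q)) : R :=
  \sum_(i < p) \sum_(j < q) A i j * B i j.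

Definition fnorm {R : realType} {p q : nat} (A : 'M[R]_(p, q)) : R :=
  Num.sqrt (frob A A).

Definition hnorm {R : realType} {m n : nat} (V : 'M[R]_n) (X : 'M[R]_(m, n)) : R :=
  Num.sqrt (frob (X^T *m X) ((fnorm V)^-1 *: V)).

Definition hinge {R : realType} (a y : R) : R := Num.max 0 (1 - a * y).

Definition supf {R : realType} {T : Type} (f : T -> R) (S : set T) : R :=
  sup [set f x | x in S].

Definition hinge_const {R : realType} (K : R) : R :=
  sup [set z : R | exists a y : R,
          [/\ - K <= a <= K, (y = 1 \/ y = -1) & z = `|hinge a y|]].

(* Main.v *)
Require Import Defs.
From HB Require Import structures.
From mathcomp Require Import all_boot all_order all_algebra.
From mathcomp Require Import boolp classical_sets reals.
From mathcomp Require Import ring lra.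
Import Order.TTheory GRing.Theory Num.Theory.
Local Open Scope ring_scope.
Local Open Scope classical_set_scope.

Lemma CS (R : realType) (I : finType) (a b : I -> R) :
  (\sum_i a i * b i) ^+ 2 <= (\sum_i a i ^+ 2) * (\sum_i b i ^+ 2).
Proof.
have H : 0 <= \sum_i \sum_j (a i * b j - a j * b i) ^+ 2.
  by apply: sumr_ge0 => i _; apply: sumr_ge0 => j _; exact: sqr_ge0.
have E : \sum_i \sum_j (a i * b j - a j * b i) ^+ 2 =
   ((\sum_i a i ^+ 2) * (\sum_i b i ^+ 2) - (\sum_i a i * b i) ^+ 2) *+ 2.
  have e1 : (\sum_i a i ^+ 2) * (\sum_i b i ^+ 2) = \sum_i \sum_j a i ^+ 2 * b j ^+ 2.
    by rewrite mulr_suml; apply: eq_bigr => i _; rewrite mulr_sumr.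
  have e2 : (\sum_i a i ^+ 2) * (\sum_i b i ^+ 2) = \sum_i \sum_j a j ^+ 2 * b i ^+ 2.
    by rewrite mulrC mulr_suml; apply: eq_bigr => i _; rewrite mulr_sumr; apply: eq_bigr => j _; rewrite mulrC.
  have e3 : (\sum_i a i * b i) ^+ 2 *+ 2 = \sum_i \sum_j (a i * b i) * (a j * b j) *+ 2.
    rewrite expr2 mulr_suml -sumrMnl; apply: eq_bigr => i _; rewrite mulr_sumr -sumrMnl; done.
  rewrite mulrnBl mulr2n {1}e1 e2 e3.
  rewrite -!big_split -sumrB /=; apply: eq_bigr => i _.
  rewrite -!big_split -sumrB /=; apply: eq_bigr => j _.
  ring.
by move: H; rewrite E pmulrn_lge0 // subr_ge0.
Qed.

Lemma frob_pair (R : realType) p q (A B : 'M[R]_(p, q)) :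
  frob A B = \sum_(x : 'I_p * 'I_q) A x.1 x.2 * B x.1 x.2.
Proof. by rewrite /frob pair_big. Qed.

Lemma frob_ge0 (R : realType) p q (A : 'M[R]_(p, q)) : 0 <= frob A A.
Proof. by apply: sumr_ge0 => i _; apply: sumr_ge0 => j _; rewrite -expr2 sqr_ge0. Qed.

Lemma frob_CS (R : realType) p q (A B : 'M[R]_(p, q)) :
  frob A B <= fnorm A * fnorm B.
Proof.
have H : frob A B ^+ 2 <= frob A A * frob B B.
  rewrite !frob_pair.
  have := @CS _ _ (fun x : 'I_p * 'I_q => A x.1 x.2) (fun x => B x.1 x.2).
  move=> h; apply: le_trans h _; apply: ler_pM; rewrite ?sumr_ge0 // => *; rewrite ?sqr_ge0 //;
   by apply/eqW/eq_bigr => *; rewrite expr2.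
rewrite /fnorm -sqrtrM ?frob_ge0 //.
apply: le_trans (ler_norm _) _.
by rewrite -sqrtr_sqr ler_wsqrtr.
Qed.

Lemma frob_scaler (R : realType) p q (A B : 'M[R]_(p, q)) k :
  frob A (k *: B) = k * frob A B.
Proof.
rewrite /frob mulr_sumr; apply: eq_bigr => i _; rewrite mulr_sumr.
by apply: eq_bigr => j _; rewrite mxE mulrCA.
Qed.

Lemma frob_mul (R : realType) m n (X : 'M[R]_(m, n)) :
  frob (X^T *m X) (X^T *m X) <= frob X X ^+ 2.
Proof.
pose c j := \sum_i X i j ^+ 2.
have -> : frob X X = \sum_j c j.
  by rewrite /frob exchange_big; apply: eq_bigr => j _; apply: eq_bigr => i _; rewrite expr2.
rewrite expr2 mulr_suml /frob; apply: ler_sum => j _; rewrite mulr_sumr; apply: ler_sum => k _.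
rewrite !mxE -expr2.
have := @CS _ _ (fun i => X i j) (fun i => X i k).
suff -> : \sum_j0 X^T j j0 * X j0 k = \sum_i X i j * X i k by []. by apply: eq_bigr => i _; rewrite mxE.
Qed.

Lemma hnorm_le (R : realType) m n (V : 'M[R]_n) (X : 'M[R]_(m, n)) :
  hnorm V X <= fnorm X.
Proof.
rewrite /hnorm frob_scaler.
have h1 : (fnorm V)^-1 * frob (X^T *m X) V <= fnorm (X^T *m X).
  have [->|nz] := eqVneq (fnorm V) 0; first by rewrite invr0 mul0r sqrtr_ge0.
  have pos : 0 < fnorm V by rewrite lt_def nz sqrtr_ge0.
  rewrite ler_pdivrMl // mulrC; exact: frob_CS.
have h2 : fnorm (X^T *m X) <= frob X X.
  rewrite /fnorm -[X in _ <= X]ger0_norm ?frob_ge0 // -sqrtr_sqr.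
  exact/ler_wsqrtr/frob_mul.
rewrite /fnorm; apply: ler_wsqrtr; exact: le_trans h1 h2.
Qed.

Lemma supf_mono (R : realType) T (f g : T -> R) (S : set T) :
  (forall x, S x -> f x <= g x) -> (exists M, forall x, S x -> g x <= M) ->
  supf f S <= supf g S.
Proof.
move=> fg [M hM]; rewrite /supf.
have [[x0 Sx0]|S0] := pselect (S !=set0); last first.
  have -> : S = set0 by apply/seteqP; split => x Sx //; apply: S0; exists x.
  by rewrite !image_set0.
apply: ge_sup; first by exists (f x0), x0.
move=> _ [x Sx <-]; apply: le_trans (fg x Sx) _.
apply: sup_upper_bound; last by exists x.
split; first by exists (g x0), x0.
by exists M => _ [y Sy <-]; exact: hM.
Qed.

Lemma supf_ge0 (R : realType) T (f : T -> R) (S : set T) :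
  (forall x, S x -> 0 <= f x) -> (exists M, forall x, S x -> f x <= M) ->
  0 <= supf f S.
Proof.
move=> f0 [M hM]; rewrite /supf.
have [[x0 Sx0]|S0] := pselect (S !=set0); last first.
  have -> : S = set0 by apply/seteqP; split => x Sx //; apply: S0; exists x.
  by rewrite image_set0 sup0.
apply: le_trans (f0 _ Sx0) _.
apply: sup_upper_bound; last by exists x0.
split; first by exists (f x0), x0.
by exists M => _ [y Sy <-]; exact: hM.
Qed.

Lemma hinge_le (R : realType) (K a y : R) : - K <= a <= K -> (y = 1 \/ y = -1) ->
  `|hinge a y| <= 1 + K.
Proof.
move=> /andP[h1 h2] hy; rewrite /hinge ger0_norm ?le_max ?lexx //.
rewrite ge_max; apply/andP; split; first lra.
by case: hy => ->; lra.
Qed.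

Lemma hinge_const_mono (R : realType) (K' K : R) : 0 <= K' -> K' <= K ->
  hinge_const K' <= hinge_const K.
Proof.
move=> h0 h1; rewrite /hinge_const.
apply: ge_sup.
  exists `|hinge 0 1|, 0, 1; split => //; [apply/andP; split; lra | by left].
move=> _ [a [y [ha hy ->]]].
apply: sup_upper_bound.
  split.
    exists `|hinge 0 1|, 0, 1; split => //; [apply/andP; split; lra | by left].
  by exists (1 + K) => _ [b [z [hb hz ->]]]; exact: hinge_le hb hz.
exists a, y; split => //; move/andP: ha => [? ?]; apply/andP; split; lra.
Qed.

Theorem theorem3 (R : realType) (m n : nat) (hm : (0 < m)%N) (hn : (0 < n)%N)
  (V : 'M[R]_n) (hV0 : V != 0) (hVsym : V^T = V)
  (hVpsd : forall X : 'M[R]_(m, n), 0 <= frob (X^T *m X) ((fnorm V)^-1 *: V))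
  (Xd Wd : set 'M[R]_(m, n))
  (hXb : exists M : R, forall X, Xd X -> fnorm X <= M)
  (hWb : exists M : R, forall W, Wd W -> fnorm W <= M) :
  let Rc := supf fnorm Xd in
  let Bc := supf fnorm Wd in
  let Rc' := supf (hnorm V) Xd in
  let Bc' := supf (hnorm V) Wd in
  let c := hinge_const (Bc * Rc) in
  let c' := hinge_const (Bc' * Rc') in
  [/\ Rc' <= Rc, Bc' <= Bc & c' <= c].
Proof.
move=> Rc Bc Rc' Bc' c c'.
have hb : forall S : set 'M[R]_(m, n), (exists M : R, forall X, S X -> fnorm X <= M) ->
    exists M : R, forall X, S X -> hnorm V X <= M.
  by move=> S [M hM]; exists M => X SX; apply: le_trans (hM X SX); exact: hnorm_le.
have h1 : Rc' <= Rc by apply: supf_mono => // X _; exact: hnorm_le.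
have h2 : Bc' <= Bc by apply: supf_mono => // X _; exact: hnorm_le.
have g1 : 0 <= Rc' by apply: supf_ge0 (hb _ hXb) => X _; exact: sqrtr_ge0.
have g2 : 0 <= Bc' by apply: supf_ge0 (hb _ hWb) => X _; exact: sqrtr_ge0.
split => //; apply: hinge_const_mono; first exact: mulr_ge0.
exact: ler_pM.
Qed.
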